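(* Let $G$ and $H$ be non-archimedean topological groups and suppose $H$ is a $G$-group. Then the topological semidirect product $H\rtimes G$ is non-archimedean.
   Context: A topological group is non-archimedean if it has a local base at the identity consisting of open subgroups. $H$ is a $G$-group if there is a continuous action $G\times H\to H$ such that each translation $h\mapsto gh$ is a group automorphism of $H$. $H\rtimes G$ is $H\times G$ with the product topology and multiplication $(h_1,g_1)(h_2,g_2)=(h_1\cdot g_1h_2,\ g_1g_2)$. *)

(* Defs.v *)
From Stdlib Require Import Classical.

Set Implicit Arguments.

Definition is_topology (T : Type) (op : (T -> Prop) -> Prop) : Prop :=
  op (fun _ => True) /\
  (forall (I : Type) (F : I -> T -> Prop),
      (forall i, op (F i)) -> op (fun x => exists i, F i x)) /\
  (forall A B, op A -> op B -> op (fun x => A x /\ B x)).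

Definition prod_open (A B : Type) (opA : (A -> Prop) -> Prop)
  (opB : (B -> Prop) -> Prop) (U : A * B -> Prop) : Prop :=
  forall p, U p -> exists (V : A -> Prop) (W : B -> Prop),
    opA V /\ opB W /\ V (fst p) /\ W (snd p) /\
    (forall a b, V a -> W b -> U (a, b)).

Definition continuous (A B : Type) (opA : (A -> Prop) -> Prop)
  (opB : (B -> Prop) -> Prop) (f : A -> B) : Prop :=
  forall U, opB U -> opA (fun x => U (f x)).

Record group_top := GroupTop {
  gcar :> Type;
  gmul : gcar -> gcar -> gcar;
  ginv : gcar -> gcar;
  gone : gcar;
  gopen : (gcar -> Prop) -> Prop
}.

Definition is_group (G : group_top) : Prop :=
  (forall x y z, gmul G x (gmul G y z) = gmul G (gmul G x y) z) /\
  (forall x, gmul G (gone G) x = x) /\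
  (forall x, gmul G x (gone G) = x) /\
  (forall x, gmul G (ginv G x) x = gone G) /\
  (forall x, gmul G x (ginv G x) = gone G).

Definition is_topological_group (G : group_top) : Prop :=
  is_group G /\ is_topology (gopen G) /\
  continuous (prod_open (gopen G) (gopen G)) (gopen G)
    (fun p => gmul G (fst p) (snd p)) /\
  continuous (gopen G) (gopen G) (ginv G).

Definition is_subgroup (G : group_top) (V : G -> Prop) : Prop :=
  V (gone G) /\ (forall x y, V x -> V y -> V (gmul G x y)) /\
  (forall x, V x -> V (ginv G x)).

Definition non_archimedean (G : group_top) : Prop :=
  is_topological_group G /\
  forall U : G -> Prop, gopen G U -> U (gone G) ->
    exists V : G -> Prop, is_subgroup G V /\ gopen G V /\
      (forall x, V x -> U x).

Definition is_G_group (G H : group_top) (act : G -> H -> H) : Prop :=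
  continuous (prod_open (gopen G) (gopen H)) (gopen H)
    (fun p => act (fst p) (snd p)) /\
  (forall h, act (gone G) h = h) /\
  (forall g1 g2 h, act (gmul G g1 g2) h = act g1 (act g2 h)) /\
  (forall g h1 h2, act g (gmul H h1 h2) = gmul H (act g h1) (act g h2)) /\
  (forall g, (forall h1 h2, act g h1 = act g h2 -> h1 = h2) /\
             (forall h, exists h', act g h' = h)).

Definition semidirect (G H : group_top) (act : G -> H -> H) : group_top :=
  @GroupTop (gcar H * gcar G)
    (fun p q => (gmul H (fst p) (act (snd p) (fst q)), gmul G (snd p) (snd q)))
    (fun p => (act (ginv G (snd p)) (ginv H (fst p)), ginv G (snd p)))
    (gone H, gone G)
    (prod_open (gopen H) (gopen G)).

Arguments is_G_group : clear implicits.
Arguments semidirect : clear implicits.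

(* Main.v *)
Require Import Defs.
From Stdlib Require Import Classical FunctionalExtensionality PropExtensionality.

Lemma local_open (T : Type) (op : (T -> Prop) -> Prop) (S : T -> Prop) :
  is_topology op ->
  (forall x, S x -> exists W, op W /\ W x /\ forall y, W y -> S y) -> op S.
Proof.
  intros [_ [Hu _]] H.
  set (I := {W : T -> Prop | op W /\ forall y, W y -> S y}).
  assert (E : S = (fun x => exists i : I, proj1_sig i x)).
  { apply functional_extensionality; intro x; apply propositional_extensionality; split.
    - intro Sx. destruct (H x Sx) as [W [oW [Wx WS]]].
      exists (exist _ W (conj oW WS)); exact Wx.
    - intros [[W [oW WS]] Wx]; simpl in Wx; auto. }
  rewrite E. apply Hu. intros [W [oW WS]]; exact oW.
Qed.

Lemma box_open (A B : Type) (opA : (A -> Prop) -> Prop) (opB : (B -> Prop) -> Prop)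
  X Y : opA X -> opB Y -> prod_open opA opB (fun p => X (fst p) /\ Y (snd p)).
Proof.
  intros oX oY p [Xp Yp]. exists X, Y. repeat split; auto.
Qed.

Lemma prod_topology (A B : Type) (opA : (A -> Prop) -> Prop) (opB : (B -> Prop) -> Prop) :
  is_topology opA -> is_topology opB -> is_topology (prod_open opA opB).
Proof.
  intros [TA [UA IA]] [TB [UB IB]]. split; [|split].
  - intros p _. exists (fun _ => True), (fun _ => True). repeat split; auto.
  - intros I F HF p [i Hi]. destruct (HF i p Hi) as [V [W [oV [oW [Vp [Wp Hb]]]]]].
    exists V, W. repeat split; auto. intros a b Va Wb. exists i. auto.
  - intros U1 U2 H1 H2 p [U1p U2p].
    destruct (H1 p U1p) as [V1 [W1 [oV1 [oW1 [V1p [W1p Hb1]]]]]].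
    destruct (H2 p U2p) as [V2 [W2 [oV2 [oW2 [V2p [W2p Hb2]]]]]].
    exists (fun x => V1 x /\ V2 x), (fun x => W1 x /\ W2 x).
    split; [auto|split; [auto|split; [auto|split; [auto|]]]].
    intros a0 b0 [? ?] [? ?]; auto.
Qed.

Section S.
Variables (G H : group_top) (act : G -> H -> H).
Hypothesis gG : is_group G.
Hypothesis gH : is_group H.
Hypothesis HA : is_G_group G H act.

Lemma idem_one (x : H) : gmul H x x = x -> x = gone H.
Proof.
  destruct gH as [a [l [r [li ri]]]]. intro E.
  transitivity (gmul H (ginv H x) (gmul H x x)).
  - rewrite a, li, l. reflexivity.
  - rewrite E, li. reflexivity.
Qed.

Lemma act_one g : act g (gone H) = gone H.
Proof.
  destruct gH as [a [l [r [li ri]]]]. destruct HA as [_ [_ [_ [hom _]]]].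
  apply idem_one. rewrite <- hom, l. reflexivity.
Qed.

Lemma act_inv g h : act g (ginv H h) = ginv H (act g h).
Proof.
  destruct gH as [a [l [r [li ri]]]]. destruct HA as [_ [_ [_ [hom _]]]].
  transitivity (gmul H (act g (ginv H h)) (gmul H (act g h) (ginv H (act g h)))).
  - rewrite ri, r. reflexivity.
  - rewrite a, <- hom, li, act_one, l; auto.
Qed.
End S.

Theorem corollary3p4 (G H : group_top) (act : G -> H -> H) :
  non_archimedean G -> non_archimedean H -> is_G_group G H act ->
  non_archimedean (semidirect G H act).
Proof.
  intros [[gG [topG [mulG invG]]] naG] [[gH [topH [mulH invH]]] naH] HA.
  pose proof HA as HA'.
  destruct HA' as [actC [act1 [actM [hom _]]]].
  pose proof gG as gG'. pose proof gH as gH'.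
  destruct gG' as [aG [lG [rG [liG riG]]]].
  destruct gH' as [aH [lH [rH [liH riH]]]].
  split; [split; [|split; [|split]]|].
  -
    split; [|split; [|split; [|split]]].
    + intros [h1 g1] [h2 g2] [h3 g3]; simpl. f_equal.
      * rewrite hom, actM, aH. reflexivity.
      * apply aG.
    + intros [h g]; simpl. rewrite act1, lH, lG. reflexivity.
    + intros [h g]; simpl. rewrite act_one, rH, rG by assumption. reflexivity.
    + intros [h g]; simpl. rewrite <- hom, liH, liG, act_one by assumption. reflexivity.
    + intros [h g]; simpl. rewrite <- actM, riG, act1, riH. reflexivity.
  - apply prod_topology; assumption.
  - intros U HU. intros [[h1 g1] [h2 g2]]; simpl. intro Hp.
    destruct (HU _ Hp) as [V [W [oV [oW [Vp [Wp Hb]]]]]]. simpl in Vp, Wp.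
    destruct (mulH V oV (h1, act g1 h2) Vp) as [V1 [V2 [oV1 [oV2 [V1p [V2p Hb1]]]]]].
    simpl in V1p, V2p.
    destruct (actC V2 oV2 (g1, h2) V2p) as [A [B [oA [oB [Ap [Bp Hb2]]]]]].
    simpl in Ap, Bp.
    destruct (mulG W oW (g1, g2) Wp) as [W1 [W2 [oW1 [oW2 [W1p [W2p Hb3]]]]]].
    simpl in W1p, W2p.
    exists (fun p => V1 (fst p) /\ (fun x => A x /\ W1 x) (snd p)),
           (fun q => B (fst q) /\ W2 (snd q)).
    split; [apply (@box_open _ _ (gopen H) (gopen G) V1 (fun x => A x /\ W1 x)); auto; apply (proj2 (proj2 topG)); auto|].
    split; [apply (@box_open _ _ (gopen H) (gopen G) B W2); auto|].
    split; [simpl; auto|]. split; [simpl; auto|].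
    intros [a1 b1] [a2 b2] [Ha1 [Hb1' Hc1]] [Ha2 Hb2']. simpl in *.
    apply Hb.
    + apply (Hb1 a1 (act b1 a2)); auto; apply (Hb2 b1 a2); auto.
    + apply (Hb3 b1 b2); auto.
  - intros U HU [h g]; simpl. intro Hp.
    destruct (HU _ Hp) as [V [W [oV [oW [Vp [Wp Hb]]]]]]. simpl in Vp, Wp.
    destruct (actC V oV (ginv G g, ginv H h) Vp) as [A [B [oA [oB [Ap [Bp Hb2]]]]]].
    simpl in Ap, Bp.
    exists (fun x => B (ginv H x)), (fun y => A (ginv G y) /\ W (ginv G y)).
    split; [apply invH; auto|].
    split; [apply (invG (fun y => A y /\ W y)); apply (proj2 (proj2 topG)); auto|].
    split; [simpl; auto|]. split; [simpl; auto|].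
    intros a b Ba [Ab Wb]. apply Hb; simpl; auto. apply (Hb2 _ _ Ab Ba).
  - intros U HU U1.
    destruct (HU _ U1) as [V [W [oV [oW [Vp [Wp Hb]]]]]]. simpl in Vp, Wp.
    destruct (naH V oV Vp) as [L [[L1 [LM LI]] [oL LV]]].
    assert (actL : gopen H (fun h => L (act (gone G) h))) by (rewrite (functional_extensionality _ _ (fun h => f_equal L (act1 h))); auto).
    destruct (actC L oL (gone G, gone H)) as [K1 [B [oK1 [oB [K1p [Bp Hb2]]]]]].
    { simpl. rewrite act_one by assumption. exact L1. }
    simpl in K1p, Bp.
    destruct (naG (fun x => K1 x /\ W x)) as [K [[K1' [KM KI]] [oK KW]]].
    { apply (proj2 (proj2 topG)); auto. }
    { auto. }
    set (M := fun h => forall k, K k -> L (act k h)).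
    assert (MK : forall k h, K k -> M h -> M (act k h)).
    { intros k h Kk Mh k' Kk'. rewrite <- actM. apply Mh. apply KM; auto. }
    assert (ML : forall h, M h -> L h).
    { intros h Mh. rewrite <- (act1 h). apply Mh; auto. }
    assert (Msub : is_subgroup H M).
    { split; [|split].
      - intros k _. rewrite act_one by assumption. exact L1.
      - intros x y Mx My k Kk. rewrite hom. apply LM; auto.
      - intros x Mx k Kk. rewrite act_inv by assumption. apply LI; auto. }
    assert (oM : gopen H M).
    { apply local_open; auto. intros m Mm.
      exists (fun x => B (gmul H (ginv H m) x)). split; [|split].
      - destruct (mulH B oB) as [_ _] || idtac.
        apply local_open; auto. intros x Bx.
        destruct (mulH B oB (ginv H m, x) Bx) as [X1 [X2 [_ [oX2 [X1p [X2p Hb4]]]]]].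
        exists X2. split; auto. split; auto. intros y Y2. apply (Hb4 _ y X1p Y2).
      - simpl. rewrite liH. exact Bp.
      - intros y By.
        replace y with (gmul H m (gmul H (ginv H m) y)) by (rewrite aH, riH, lH; auto).
        destruct Msub as [_ [Mmul _]]. apply Mmul; auto.
        intros k Kk. apply Hb2; auto. apply KW; auto. }
    exists (fun p => M (fst p) /\ K (snd p)).
    split; [|split].
    + split; [|split].
      * simpl. split; auto. destruct Msub; auto.
      * intros [h1 g1] [h2 g2] [Mh1 Kg1] [Mh2 Kg2]; simpl in *. split; auto.
        destruct Msub as [_ [Mmul _]]. apply Mmul; auto.
      * intros [h g] [Mh Kg]; simpl in *. split; auto.
        apply MK; auto. destruct Msub as [_ [_ Minv]]; auto.
    + apply (@box_open _ _ (gopen H) (gopen G) M K); auto.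
    + intros [h g] [Mh Kg]. apply Hb; simpl; auto. apply KW; auto.
Qed.
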